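(* Assume the setting below. Define $\beta_{TDMA}(x,L)=C\max\{\lfloor x/p\rfloor L,\ x-\lceil x/p\rceil(p-L)\}$ and $$\beta_{ST}(t)=\min_{0\le i\le N-1}\ \sum_{j=i}^{i+N-1}\beta_{TDMA}\big(t+p-L_j-g_i-o_{j,i},\ L_j\big),\qquad t\ge0,$$ where $g_i=o_i-(o_{i-1}+L_{i-1})$ is the idle time between the closing of the preceding ST window and the opening of window $i$. Then for all $s\in\mathbb R$ and $\Delta t\ge 0$, $C\cdot\Delta t_{ST}(s,s+\Delta t)\ge\beta_{ST}(\Delta t)$; i.e. $\beta_{ST}$ is a strict service curve for ST traffic at the port (non-preemption mode).
   Context: Fix an output port with physical link rate $C>0$. Its gate control list (GCL) is periodic with period $p>0$ and contains $N\ge 1$ scheduled-traffic (ST) windows per period. Window $k\in\{0,\dots,N-1\}$ is the interval $[o_k,o_k+L_k)$, where $0\le o_0<o_1<\dots<o_{N-1}<p$, $L_k\ge 0$, $o_k+L_k\le o_{k+1}$ for $k<N-1$ and $o_{N-1}+L_{N-1}\le o_0+p$. Indices are extended to all integers periodically: $o_{k+N}=o_k+p$, $L_{k+N}=L_k$. Relative offsets are $o_{j,i}=o_j-o_i$. Let $S=\bigcup_{k\in\mathbb Z}[o_k,o_k+L_k)$ and for $s\le t$ let $\Delta t_{ST}(s,t)$ be the Lebesgue measure of $S\cap[s,t]$. *)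

(* Defs.v *)
From HB Require Import structures.
From mathcomp Require Import all_boot all_order all_algebra.
From mathcomp Require Import all_classical all_reals all_analysis.
Set Implicit Arguments. Unset Strict Implicit. Unset Printing Implicit Defensive.
Import Order.TTheory GRing.Theory Num.Theory.
Local Open Scope classical_set_scope.
Local Open Scope ring_scope.

Section GCL.
Variables (R : realType) (p : R) (N : nat) (o L : nat -> R).

(* periodic extension of window indices to all integers:
   o_{k+N} = o_k + p, L_{k+N} = L_k *)
Definition oz (k : int) : R := o `|(k %% N)%Z|%N + ((k %/ N)%Z)%:~R * p.
Definition Lz (k : int) : R := L `|(k %% N)%Z|%N.

Definition ST_set : set R := [set x | exists k : int, oz k <= x /\ x < oz k + Lz k].

Definition gap (i : int) : R := oz i - (oz (i - 1) + Lz (i - 1)).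

Definition orel (j i : int) : R := oz j - oz i.
End GCL.

Definition beta_TDMA (R : realType) (C p : R) (x Lw : R) : R :=
  C * Num.max ((Num.floor (x / p))%:~R * Lw) (x - (Num.ceil (x / p))%:~R * (p - Lw)).

Definition beta_term (R : realType) (C p : R) (N : nat) (o L : nat -> R) (t : R) (i : nat) : R :=
  \sum_(i <= j < i + N)
     beta_TDMA C p (t + p - Lz N L j%:Z - gap p N o L i%:Z - orel p N o j%:Z i%:Z)
               (Lz N L j%:Z).

Definition beta_ST (R : realType) (C p : R) (N : nat) (o L : nat -> R) (t : R) : R :=
  \big[Num.min/beta_term C p N o L t 0%N]_(i < N) beta_term C p N o L t i.

Definition dt_ST (R : realType) (p : R) (N : nat) (o L : nat -> R) (s t : R) : \bar R :=
  (@lebesgue_measure R) (ST_set p N o L `&` `[s, t]).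

(* Main.v *)
Require Import Defs.
From HB Require Import structures.
From mathcomp Require Import all_boot all_order all_algebra.
From mathcomp Require Import all_classical all_reals all_analysis.
From mathcomp Require Import ring lra zify.
Import Order.TTheory GRing.Theory Num.Theory.
Local Open Scope classical_set_scope.
Local Open Scope ring_scope.

Lemma class_bound (R : realType) (P Lw c o1 e : R) (K : nat) :
  0 < P -> 0 <= Lw -> c <= o1 -> o1 + Lw <= c + P -> c <= e ->
  let x := (e - c) + P - Lw - (o1 - c) in
  (`|Num.floor (x / P)| < K)%N ->
  Num.max ((Num.floor (x / P))%:~R * Lw) (x - (Num.ceil (x / P))%:~R * (P - Lw))
  <= \sum_(0 <= m < K) Num.max 0 (Num.min (o1 + m%:R * P + Lw) e - (o1 + m%:R * P)).
Proof.
move=> hP hL h1 h2 h3 x hK.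
have x0 : 0 <= x by rewrite /x; lra.
have hn0 : 0 <= Num.floor (x / P) by rewrite floor_ge0 divr_ge0 // ltW.
set n := Num.floor (x / P) in hn0 hK *.
set nn := `|n|%N in hK.
have nE : n = nn%:Z by rewrite /nn gez0_abs.
have nR : n%:~R = nn%:R :> R by rewrite nE.
have hfl : nn%:R * P <= x.
  by rewrite -nR -ler_pdivlMr // /n floor_le.
have hfu : x < (nn%:R + 1) * P.
  by rewrite -ltr_pdivrMr // -nR -[1]/(1%:~R) -rmorphD /n floorD1_gt.
set T := fun m : nat => Num.max 0 (Num.min (o1 + m%:R * P + Lw) e - (o1 + m%:R * P)).
have T0 m : 0 <= T m by rewrite /T le_max lexx.
have hsum : \sum_(0 <= m < nn.+1) T m <= \sum_(0 <= m < K) T m.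
  rewrite [leRHS](big_cat_nat _ (n := nn.+1)) //= ?leq0n // lerDl.
  by apply: sumr_ge0 => i _.
apply: le_trans hsum.
rewrite big_nat_recr //=.
have -> : \sum_(0 <= i < nn) T i = nn%:R * Lw.
  rewrite (eq_big_nat _ _ (F2 := fun _ => Lw)); last first.
    move=> i /andP [_ hi]; rewrite /T.
    have : (i.+1%:R : R) <= nn%:R by rewrite ler_nat.
    rewrite -natr1 => hi'.
    have : (i%:R + 1) * P <= nn%:R * P by rewrite ler_pM2r.
    move=> hh.
    have hm : o1 + i%:R * P + Lw <= e by rewrite /x in hfl; lra.
    rewrite (min_l hm) max_r; lra.
  by rewrite sumr_const_nat subn0 mulr_natl.
have hT : e - o1 - nn%:R * P <= T nn.
  rewrite /T le_max; apply/orP; right.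
  have hm : e <= o1 + nn%:R * P + Lw by rewrite /x in hfu; lra.
  rewrite (min_r hm); lra.
rewrite nR ge_max; apply/andP; split.
  by rewrite lerDl.
have hc : n <= Num.ceil (x / P).
  by rewrite -(ler_int R); apply: le_trans (floor_le _) (ceil_ge _).
set cc := Num.ceil (x / P) in hc *.
have hPL : 0 <= P - Lw by lra.
case: (leP cc n) => hcn.
  have ecc : cc = n by apply/eqP; rewrite eq_le hcn hc.
  have hx : x / P <= nn%:R by rewrite -nR -ecc /cc ceil_ge.
  have hx' : x <= nn%:R * P by rewrite -ler_pdivrMr.
  rewrite ecc nR.
  have : 0 <= T nn by [].
  lra.
have hcn' : (nn%:R + 1 : R) <= cc%:~R.
  by rewrite -nR -[1]/(1%:~R) -rmorphD ler_int; lia.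
have : (nn%:R + 1) * (P - Lw) <= cc%:~R * (P - Lw) by apply: ler_wpM2r.
rewrite /x in hfl hfu *.
nra.
Qed.

Section S.
Variables (R : realType) (p : R) (N : nat) (o L : nat -> R).
Hypothesis hN : (0 < N)%N.

Lemma ozE (m : int) (j : nat) : (j < N)%N ->
  oz p N o (m * N%:Z + j%:Z) = o j + m%:~R * p /\ Lz N L (m * N%:Z + j%:Z) = L j.
Proof.
move=> hj.
have N0 : N%:Z != 0 by rewrite eqz_nat; lia.
have hd : ((m * N%:Z + j%:Z) %/ N%:Z)%Z = m.
  by rewrite divzMDl // divz_small ?addr0 //; apply/andP; split => //; rewrite ltz_nat.
have hm : ((m * N%:Z + j%:Z) %% N%:Z)%Z = j%:Z.
  by rewrite modzMDl modz_small //; apply/andP; split => //; rewrite ltz_nat.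
by rewrite /oz /Lz hd hm.
Qed.

Lemma ozEo m j (hj : (j < N)%N) : oz p N o (m * N%:Z + j%:Z) = o j + m%:~R * p.
Proof. exact: (ozE m j hj).1. Qed.
Lemma ozEL m j (hj : (j < N)%N) : Lz N L (m * N%:Z + j%:Z) = L j.
Proof. exact: (ozE m j hj).2. Qed.

Lemma decomp (k : int) : exists (m : int) (j : nat), (j < N)%N /\ k = m * N%:Z + j%:Z.
Proof.
have N0 : N%:Z != 0 by rewrite eqz_nat; lia.
exists (k %/ N%:Z)%Z, `|(k %% N%:Z)%Z|%N; split.
  have d0 : (0 < N%:Z) by rewrite ltz_nat.
  have := ltz_pmod k d0.
  by rewrite -[X in (X < _)]gez0_abs ?modz_ge0 // ltz_nat.
by rewrite gez0_abs ?modz_ge0 // -divz_eq.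
Qed.
Hypothesis hp : 0 < p.
Hypothesis hL : forall k : nat, (k < N)%N -> 0 <= L k.
Hypothesis hdisj : forall k : nat, (k.+1 < N)%N -> o k + L k <= o k.+1.
Hypothesis hwrap : o N.-1 + L N.-1 <= o 0%N + p.

Local Notation oz := (oz p N o).
Local Notation Lz := (Lz N L).

Lemma Lz_ge0 k : 0 <= Lz k.
Proof. by have [m [j [hj ->]]] := decomp k; rewrite ozEL //; exact: hL. Qed.

Lemma ozq k (q : int) : oz (k + q * N%:Z) = oz k + q%:~R * p /\ Lz (k + q * N%:Z) = Lz k.
Proof.
have [m [j [hj ->]]] := decomp k.
have -> : m * N%:Z + j%:Z + q * N%:Z = (m + q) * N%:Z + j%:Z by ring.
rewrite !ozEo // !ozEL // rmorphD /=; split => //; ring.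
Qed.

Lemma step k : oz k + Lz k <= oz (k + 1).
Proof.
have [m [j [hj ->]]] := decomp k.
case: (ltnP j.+1 N) => hj1.
  have -> : m * N%:Z + j%:Z + 1 = m * N%:Z + j.+1%:Z by rewrite -addrA -[1]/(1%:Z) -PoszD addn1.
  rewrite !ozEo // !ozEL //; have := hdisj _ hj1; lra.
have ej : j = N.-1 by lia.
have -> : m * N%:Z + j%:Z + 1 = (m + 1) * N%:Z + 0%N%:Z.
  rewrite ej mulrDl mul1r addr0 -addrA; congr (_ + _).
  by rewrite -[1]/(1%:Z) -PoszD addn1 prednK.
have hw := hwrap; rewrite -ej in hw.
rewrite !ozEo // !ozEL // rmorphD /=; lra.
Qed.

Definition cz k := oz k + Lz k.

Lemma cz_mono k (n : nat) : cz k <= cz (k + n%:Z).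
Proof.
elim: n => [|n IH]; first by rewrite addr0.
apply: (le_trans IH); rewrite /cz.
have -> : k + n.+1%:Z = (k + n%:Z) + 1 by rewrite -addrA -[1]/(1%:Z) -PoszD addn1.
have := step (k + n%:Z); have := Lz_ge0 (k + n%:Z + 1); lra.
Qed.

Lemma cz_oz k (n : nat) : cz k <= oz (k + n.+1%:Z).
Proof.
have -> : k + n.+1%:Z = (k + n%:Z) + 1 by rewrite -addrA -[1]/(1%:Z) -PoszD addn1.
apply: le_trans (step _); exact: cz_mono.
Qed.
Local Notation S := (ST_set p N o L).

Lemma S_meas : measurable S.
Proof.
rewrite (_ : S = \bigcup_(k : int) `[oz k, (oz k + Lz k)[%classic).
  apply: countable_bigcupT_measurable; first exact: countableP.
  by move=> k; exact: measurable_itv.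
apply/seteqP; split => x /=.
  by move=> [k hk]; exists k => //=; rewrite in_itv /=; apply/andP.
by move=> [k _]; rewrite /= in_itv /= => /andP hk; exists k.
Qed.

Lemma lam_co (x y : R) : lebesgue_measure (`[x, y[%classic : set R) = (Num.max 0 (y - x))%:E.
Proof.
rewrite lebesgue_measure_itv /= lte_fin; case: ltP => h.
  by rewrite -EFinD; congr (_%:E); apply/esym/max_idPr; lra.
by congr (_%:E); apply/esym/max_idPl; lra.
Qed.

Lemma lam_cc (x y : R) : lebesgue_measure (`[x, y]%classic : set R) = (Num.max 0 (y - x))%:E.
Proof.
rewrite lebesgue_measure_itv /= lte_fin; case: ltP => h.
  by rewrite -EFinD; congr (_%:E); apply/esym/max_idPr; lra.
by congr (_%:E); apply/esym/max_idPl; lra.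
Qed.
Definition M (a b : R) := lebesgue_measure (S `&` `[a, b]%classic).
Definition h (e : R) (k : int) := Num.max 0 (Num.min (oz k + Lz k) e - oz k).

Lemma mSI (a b : R) : measurable (S `&` `[a, b]%classic).
Proof. apply: measurableI; [exact: S_meas | exact: measurable_itv]. Qed.

Lemma ind (n : nat) : forall k a e, a <= oz k ->
  ((\sum_(0 <= u < n) h e (k + u%:Z))%:E <= M a e)%E.
Proof.
elim: n => [|n IH] k a e hak.
  by rewrite big_geq // measure_ge0.
rewrite big_nat_recl // addr0.
have -> : \sum_(0 <= i < n) h e (k + i.+1%:Z) = \sum_(0 <= i < n) h e ((k + 1) + i%:Z).
  by apply: eq_bigr => i _; rewrite -addrA -[1]/(1%:Z) -PoszD add1n.
set b := Num.min (oz k + Lz k) e.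
have hst := step k.
have hA : (`[oz k, b[%classic : set R) `<=` S `&` `[a, e]%classic.
  move=> x /=; rewrite in_itv /= => /andP [h1 h2]; split.
    exists k; split => //; apply: (lt_le_trans h2); by rewrite /b ge_min lexx.
  rewrite in_itv /=; apply/andP; split; first exact: (le_trans hak).
  apply/ltW/(lt_le_trans h2); by rewrite /b ge_min lexx orbT.
have hB : S `&` `[oz (k + 1), e]%classic `<=` S `&` `[a, e]%classic.
  move=> x [Sx]; rewrite /= !in_itv /= => /andP [h1 h2]; split => //.
  apply/andP; split => //; have := Lz_ge0 k; lra.
have hdis : (`[oz k, b[%classic : set R) `&` (S `&` `[oz (k + 1), e]%classic) = set0.
  apply/seteqP; split => x //=; rewrite !in_itv /= => -[/andP [_ h2] [_ /andP [h3 _]]].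
  have : b <= oz k + Lz k by rewrite /b ge_min lexx.
  lra.
apply: (@le_trans _ _ (lebesgue_measure ((`[oz k, b[%classic : set R) `|` (S `&` `[oz (k + 1), e]%classic)))).
  rewrite (measureU (@lebesgue_measure R) (measurable_itv _) (mSI _ _) hdis).
  rewrite EFinD; apply: leeD; last exact: IH.
  rewrite le_eqVlt; apply/orP; left; apply/eqP; rewrite /h -/b; exact/esym/lam_co.
apply: le_measure; rewrite ?inE.
- by apply: measurableU; [exact: measurable_itv|exact: mSI].
- exact: mSI.
- by move=> x [/hA|/hB].
Qed.

Lemma hb_aux (c d s : R) : c + d - Num.max (s + d) c = Num.min c (s + d) - s.
Proof.
by case: (leP c (s + d)) => hce; lra.
Qed.

Lemma reindex (F : nat -> R) (K : nat) :
  \sum_(0 <= u < N * K) F u = \sum_(0 <= t < N) \sum_(0 <= m < K) F (t + m * N)%N.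
Proof.
elim: K => [|K IH].
  by rewrite muln0 big_geq // big1 // => t _; rewrite big_geq.
rewrite mulnS addnC (big_cat_nat _ (n := N * K)) ?leq0n ?leq_addr //= IH.
have -> : \sum_((N * K)%N <= u < (N * K + N)%N) F u = \sum_(0 <= t < N) F (t + K * N)%N.
  rewrite -{1}(add0n (N * K)%N) big_addn addKn.
  by apply: eq_bigr => t _; rewrite mulnC.
rewrite -big_split /=; apply: eq_bigr => t _.
by rewrite big_nat_recr.
Qed.

Definition fT (x Lw : R) := Num.max ((Num.floor (x / p))%:~R * Lw) (x - (Num.ceil (x / p))%:~R * (p - Lw)).
Definition xt (k : int) (d : R) (t : nat) :=
  d + p - Lz (k + t%:Z) - gap p N o L k - orel p N o (k + t%:Z) k.

Lemma sum_bound k (d : R) (K : nat) : 0 <= d -> (`|Num.floor ((d + p) / p)| < K)%N ->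
  \sum_(0 <= t < N) fT (xt k d t) (Lz (k + t%:Z))
  <= \sum_(0 <= u < N * K) h (cz (k - 1) + d) (k + u%:Z).
Proof.
move=> hd hK; rewrite reindex; apply: ler_sum_nat => t /andP [_ ht].
set c := cz (k - 1); set o1 := oz (k + t%:Z); set Lw := Lz (k + t%:Z).
have hx : xt k d t = ((c + d) - c) + p - Lw - (o1 - c).
  by rewrite /xt /gap /orel /c /cz /o1 /Lw; ring.
have h1 : c <= o1.
  have := cz_oz (k - 1) t; rewrite /c /o1.
  by have -> : k - 1 + t.+1%:Z = k + t%:Z by rewrite -addn1 PoszD; ring.
have h2 : o1 + Lw <= c + p.
  have := cz_mono (k + t%:Z) (N - 1 - t)%N.
  have -> : k + t%:Z + (N - 1 - t)%N%:Z = (k - 1) + 1 * N%:Z.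
    have -> : (N - 1 - t)%N%:Z = N%:Z - 1 - t%:Z by lia.
    ring.
  rewrite /cz (ozq _ _).1 (ozq _ _).2 /c /cz /o1 /Lw; lra.
have h3 : c <= c + d by lra.
have hK' : (`|Num.floor ((((c + d) - c) + p - Lw - (o1 - c)) / p)| < K)%N.
  have hxle : (((c + d) - c) + p - Lw - (o1 - c)) / p <= (d + p) / p.
    apply: ler_wpM2r; first by rewrite invr_ge0 ltW.
    have := Lz_ge0 (k + t%:Z); rewrite -/Lw; lra.
  have := le_floor hxle.
  have : 0 <= Num.floor ((((c + d) - c) + p - Lw - (o1 - c)) / p).
    rewrite floor_ge0; apply: divr_ge0; last exact: ltW.
    have := Lz_ge0 (k + t%:Z); rewrite -/Lw; lra.
  move: hK; lia.
have := @class_bound R p Lw c o1 (c + d) K hp (Lz_ge0 (k + t%:Z)) h1 h2 h3 hK'.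
rewrite /fT hx => /le_trans; apply; apply: ler_sum_nat => m _.
have ek : k + (t + m * N)%N%:Z = (k + t%:Z) + m%:Z * N%:Z by rewrite PoszD PoszM; ring.
by rewrite /h ek (ozq _ _).1 (ozq _ _).2 -/o1 -/Lw.
Qed.

Lemma h_mono e e' k : e <= e' -> h e k <= h e' k.
Proof.
move=> he; rewrite /h; apply: le_max2 => //; apply: lerB => //.
by apply: le_min2.
Qed.

Lemma cz_shift k : cz (k + N%:Z) = cz k + p.
Proof.
rewrite /cz; have := ozq k 1; rewrite mul1r => -[-> ->]; lra.
Qed.

Lemma search k0 s (n : nat) : cz k0 <= s -> s <= cz (k0 + n%:Z) ->
  exists k, cz (k - 1) <= s <= cz k.
Proof.
elim: n => [|n IH] h1 h2.
  exists k0; apply/andP; split; last by rewrite addr0 in h2.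
  by apply: le_trans h1; have := cz_mono (k0 - 1) 1; rewrite subrK.
case: (leP s (cz (k0 + n%:Z))) => h3; first exact: IH.
exists (k0 + n.+1%:Z); apply/andP; split => //.
have -> : k0 + n.+1%:Z - 1 = k0 + n%:Z by rewrite -addn1 PoszD; ring.
exact: ltW.
Qed.

Lemma find_k s : exists k, cz (k - 1) <= s <= cz k.
Proof.
set q := Num.floor ((s - cz (-1)) / p).
set k0 := -1 + q * N%:Z.
have e0 : cz k0 = cz (-1) + q%:~R * p.
  by rewrite /cz /k0 (ozq _ _).1 (ozq _ _).2; ring.
apply: (@search k0 s N).
  rewrite e0; have : q%:~R <= (s - cz (-1)) / p by exact: floor_le.
  rewrite ler_pdivlMr // => ?; lra.
rewrite cz_shift e0.
have : (s - cz (-1)) / p < (q + 1)%:~R by exact: floorD1_gt.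
rewrite ltr_pdivrMr // rmorphD /= => ?; apply: ltW; lra.
Qed.

Lemma measB k (s d : R) : 0 <= d -> oz k <= s -> s <= cz k ->
  (M (cz k) (cz k + d) <= M s (s + d))%E.
Proof.
move=> hd h1 h2.
set c := cz k; set e := s + d; set b := Num.min c e.
have hb : c + d - Num.max e c = b - s.
  by rewrite /b /e hb_aux.
have hsb : s <= b by rewrite /b le_min h2 /e; apply/andP; split => //; lra.
have hA : (`[s, b[%classic : set R) `<=` S `&` `[s, e]%classic.
  move=> x /=; rewrite in_itv /= => /andP [x1 x2]; split.
    exists k; split; first lra.
    have : b <= c by rewrite /b ge_min lexx.
    rewrite /c /cz; lra.
  rewrite in_itv /= x1 /=; apply/ltW/(lt_le_trans x2); by rewrite /b ge_min lexx orbT.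
have hB : S `&` `[c, e]%classic `<=` S `&` `[s, e]%classic.
  move=> x [Sx]; rewrite /= !in_itv /= => /andP [x1 x2]; split => //.
  apply/andP; split => //; rewrite /c in x1; lra.
have hdis : (`[s, b[%classic : set R) `&` (S `&` `[c, e]%classic) = set0.
  apply/seteqP; split => x //=; rewrite !in_itv /= => -[/andP [_ x2] [_ /andP [x3 _]]].
  have : b <= c by rewrite /b ge_min lexx.
  lra.
have L1 : ((Num.max 0 (b - s))%:E + M c e <= M s e)%E.
  apply: (@le_trans _ _ (lebesgue_measure ((`[s, b[%classic : set R) `|` (S `&` `[c, e]%classic)))).
    rewrite (measureU (@lebesgue_measure R) (measurable_itv _) (mSI _ _) hdis).
    apply: leeD; last by [].
    rewrite le_eqVlt; apply/orP; left; apply/eqP; exact/esym/lam_co.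
  apply: le_measure; rewrite ?inE.
  - by apply: measurableU; [exact: measurable_itv|exact: mSI].
  - exact: mSI.
  - by move=> x [/hA|/hB].
have L2 : (M c (c + d) <= M c e + (Num.max 0 (b - s))%:E)%E.
  apply: (@le_trans _ _ (lebesgue_measure ((S `&` `[c, e]%classic) `|` (`[Num.max e c, c + d]%classic : set R)))).
    apply: le_measure; rewrite ?inE.
    - exact: mSI.
    - by apply: measurableU; [exact: mSI|exact: measurable_itv].
    - move=> x [Sx]; rewrite /= in_itv /= => /andP [x1 x2].
      case: (leP x e) => xe.
        by left; split => //=; rewrite in_itv /= x1 xe.
      right; rewrite /= in_itv /= x2 andbT ge_max x1 andbT; exact: ltW.
  apply: (le_trans (measureU2 (@lebesgue_measure R) (mSI _ _) (measurable_itv _))).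
  apply: leeD => //.
  rewrite le_eqVlt; apply/orP; left; apply/eqP; rewrite -hb; exact: lam_cc.
apply: (le_trans L2); rewrite addeC; exact: L1.
Qed.

Lemma case_bound (s d : R) (n : nat) : 0 <= d -> exists k,
  ((\sum_(0 <= u < n) h (cz (k - 1) + d) (k + u%:Z))%:E <= M s (s + d))%E.
Proof.
move=> hd; have [k /andP [h1 h2]] := find_k s.
case: (leP s (oz k)) => hs.
  exists k; apply: le_trans (ind n _ _ (s + d) hs).
  rewrite lee_fin; apply: ler_sum_nat => u _; apply: h_mono; lra.
exists (k + 1); rewrite addrK.
exact: (le_trans (ind n (k + 1) (cz k) (cz k + d) (step k)) (measB _ _ _ hd (ltW hs) h2)).
Qed.

Lemma shift_sum (F : nat -> R) i : \sum_(i <= u < i + N) F u = \sum_(0 <= t < N) F (i + t)%N.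
Proof.
rewrite -{1}[i]add0n big_addn addKn; apply: eq_bigr => t _; by rewrite addnC.
Qed.

Lemma main (C : R) (hC : 0 < C) (s dt : R) : 0 <= dt ->
  ((beta_ST C p N o L dt)%:E <= C%:E * dt_ST p N o L s (s + dt))%E.
Proof.
move=> hd.
set K := `|Num.floor ((dt + p) / p)|.+1.
have [k hk] := case_bound s dt (N * K) hd.
have hsb := sum_bound k dt K hd (ltnSn _).
have [m [j [hj ek]]] := decomp k.
have hbt : beta_ST C p N o L dt <= beta_term C p N o L dt j.
  exact: (bigmin_le _ (Ordinal hj)).
have hbe : beta_term C p N o L dt j = C * \sum_(0 <= t < N) fT (xt k dt t) (Lz (k + t%:Z)).
  rewrite /beta_term shift_sum mulr_sumr; apply: eq_bigr => t _.
  have e1 : k + t%:Z = (j%:Z + t%:Z) + m * N%:Z by rewrite ek; ring.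
  have e3 : k - 1 = (j%:Z - 1) + m * N%:Z by rewrite ek; ring.
  have e2 : k = j%:Z + m * N%:Z by rewrite ek; ring.
  have ex : xt k dt t = xt j%:Z dt t.
    by rewrite /xt /gap /orel e1 e3 e2 !(ozq _ _).1 !(ozq _ _).2; ring.
  have eL : Lz (k + t%:Z) = Lz (j%:Z + t%:Z) by rewrite e1 (ozq _ _).2.
  by rewrite ex eL /beta_TDMA /fT /xt PoszD.
have hr : beta_ST C p N o L dt <= C * \sum_(0 <= u < N * K) h (cz (k - 1) + dt) (k + u%:Z).
  apply: (le_trans hbt); rewrite hbe; apply: ler_wpM2l => //; exact: ltW.
apply: (@le_trans _ _ ((C * \sum_(0 <= u < N * K) h (cz (k - 1) + dt) (k + u%:Z))%:E)).
  by rewrite lee_fin.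
rewrite EFinM; apply: lee_wpmul2l; first by rewrite lee_fin ltW.
exact: hk.
Qed.
End S.

Theorem lemma4 (R : realType) (C p : R) (N : nat) (o L : nat -> R)
  (hC : 0 < C) (hp : 0 < p) (hN : (0 < N)%N)
  (ho0 : 0 <= o 0%N)
  (hoinc : forall k : nat, (k.+1 < N)%N -> o k < o k.+1)
  (holast : o N.-1 < p)
  (hL : forall k : nat, (k < N)%N -> 0 <= L k)
  (hdisj : forall k : nat, (k.+1 < N)%N -> o k + L k <= o k.+1)
  (hwrap : o N.-1 + L N.-1 <= o 0%N + p) :
  forall (s dt : R), 0 <= dt ->
    ((beta_ST C p N o L dt)%:E <= C%:E * dt_ST p N o L s (s + dt))%E.
Proof.
move=> s dt hd; apply: main => //.
Qed.
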